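(* Let $\Sigma$ be a finite alphabet and $C:\Sigma^k\to\Sigma^n$ a $(q,\delta,1,s)$-relaxed locally decodable code whose relaxed decoder is nonadaptive of the following form: for each $i\in[k]$ there is a probability distribution $\mathcal{Q}_i$ over $q$-element subsets of $[n]$ and, for each $Q\in\mathrm{supp}(\mathcal{Q}_i)$, a function $f_{i,Q}:\Sigma^Q\to\Sigma\cup\{\bot\}$; on input $y\in\Sigma^n$ and $i$, the decoder samples $Q\sim\mathcal{Q}_i$ and outputs $f_{i,Q}(y|_Q)$. Fix any $r\in\bigl(0,\frac{\delta(|\Sigma|-1)}{q|\Sigma|}(1-s|\Sigma|^q)\bigr)$. Define the decoder $\mathsf{Dec}'$ which, given oracle access to $y\in\Sigma^n$ and $i\in[k]$, samples $Q\sim\mathcal{Q}_i$ and outputs $g_{i,Q}(y|_Q)$ (with $g_{i,Q}$ as defined in the context). Then $\mathsf{Dec}'$ makes at most $q$ queries, and $C$ is a $(q,r,\varepsilon)$-locally decodable code with respect to $\mathsf{Dec}'$, where $\varepsilon=s|\Sigma|^{q}\bigl(1-\frac{1}{|\Sigma|}\bigr)+\frac{rq}{\delta}$.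
   Context: $\Delta(x,y)$ denotes Hamming distance on $\Sigma^n$; for $S\subseteq[n]$, $x|_S$ is the restriction of $x$ to coordinates in $S$. $C$ is a $(q,\delta,c,s)$-RLDC if there is a $q$-query decoder with outputs in $\Sigma\cup\{\bot\}$ such that for all $b\in\Sigma^k$, $i\in[k]$, $y$ with $\Delta(y,C(b))\le\delta n$: $\Pr[\mathsf{Dec}^{C(b)}(i)=b_i]\ge c$ and $\Pr[\mathsf{Dec}^y(i)\notin\{b_i,\bot\}]\le s$; here $c=1$. $C$ is a $(q,r,\varepsilon)$-LDC with respect to a $q$-query decoder $\mathsf{Dec}'$ with outputs in $\Sigma$ if for all $b$, $i$, and $y$ with $\Delta(y,C(b))\le rn$, $\Pr[\mathsf{Dec}'^y(i)\ne b_i]\le\varepsilon$. Heavy/light coordinates: $p_i(j):=\Pr_{Q\sim\mathcal{Q}_i}[j\in Q]$, $H_i:=\{j\in[n]:p_i(j)>q/(\delta n)\}$, $L_i:=[n]\setminus H_i$, and $L(Q):=Q\cap L_i$. For a light pattern $a\in\Sigma^{L(Q)}$, call $a$ good if there is a unique $\sigma\in\Sigma$ such that some $z\in\Sigma^Q$ with $z|_{L(Q)}=a$ has $f_{i,Q}(z)=\sigma$ (i.e., among all completions $z$ of $a$, $f_{i,Q}$ takes at least one non-$\bot$ value and all its non-$\bot$ values equal $\sigma$); otherwise $a$ is bad (either two completions give two different non-$\bot$ values, or all completions give $\bot$). For $\ell\in\Sigma^Q$ with $a=\ell|_{L(Q)}$: if $a$ is good, $g_{i,Q}(\ell):=\sigma$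 for the associated $\sigma$; if $a$ is bad, $g_{i,Q}(\ell)$ is a fresh uniformly random symbol of $\Sigma$. *)

(* Defs.v *)
From mathcomp Require Import all_boot all_order all_algebra.
Set Implicit Arguments. Unset Strict Implicit. Unset Printing Implicit Defensive.
Import Order.TTheory GRing.Theory Num.Theory.
Local Open Scope ring_scope.

Notation word Sigma n := {ffun 'I_n -> Sigma}.

Definition hdist (Sigma : finType) (n : nat) (x y : word Sigma n) : nat :=
  #|[set j | x j != y j]|.

Definition is_distr (R : numDomainType) (T : finType) (D : T -> R) : Prop :=
  (forall t, 0 <= D t) /\ \sum_(t : T) D t = 1.

(* h : Sigma^n -> X depends only on the coordinates in S, i.e. is a function of y|_S. *)
Definition local_on (Sigma : finType) (n : nat) (X : Type) (S : {set 'I_n})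
  (h : word Sigma n -> X) : Prop :=
  forall y y' : word Sigma n, (forall j, j \in S -> y j = y' j) -> h y = h y'.

(* Probability that the nonadaptive decoder (D, f) on oracle y produces an
   output (in Sigma ∪ {⊥}, ⊥ = None) satisfying P:  Pr_{Q~D}[P (f_Q(y|_Q))]. *)
Definition dec_prob (R : numDomainType) (Sigma : finType) (n : nat)
  (D : {set 'I_n} -> R) (f : {set 'I_n} -> word Sigma n -> option Sigma)
  (y : word Sigma n) (P : pred (option Sigma)) : R :=
  \sum_(Q : {set 'I_n} | P (f Q y)) D Q.

Definition query_prob (R : numDomainType) (n : nat) (D : {set 'I_n} -> R) (j : 'I_n) : R :=
  \sum_(Q : {set 'I_n} | j \in Q) D Q.

Definition heavy (R : numFieldType) (n : nat) (D : {set 'I_n} -> R) (q : nat) (delta : R)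
  : {set 'I_n} :=
  [set j | q%:R / (delta * n%:R) < query_prob D j].

Definition light_part (R : numFieldType) (n : nat) (D : {set 'I_n} -> R) (q : nat) (delta : R)
  (Q : {set 'I_n}) : {set 'I_n} :=
  Q :\: heavy D q delta.

Definition completion_values (Sigma : finType) (n : nat)
  (fQ : word Sigma n -> option Sigma) (L : {set 'I_n}) (y : word Sigma n) : {set Sigma} :=
  [set s | [exists z : word Sigma n, [forall j in L, z j == y j] && (fQ z == Some s)]].

(* Some sigma if the pattern y|_L is good with associated symbol sigma, None if bad. *)
Definition good_val (Sigma : finType) (n : nat)
  (fQ : word Sigma n -> option Sigma) (L : {set 'I_n}) (y : word Sigma n) : option Sigma :=
  let V := completion_values fQ L y in
  if #|V| == 1%N then [pick s in V] else None.

(* Pr[g_{i,Q}(y|_Q) = sigma]: deterministic on good patterns, uniform on bad ones. *)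
Definition g_prob {R : numFieldType} (Sigma : finType) (n : nat)
  (fQ : word Sigma n -> option Sigma) (L : {set 'I_n}) (y : word Sigma n) (s : Sigma) : R :=
  match good_val fQ L y with
  | Some t => (t == s)%:R
  | None => 1 / #|Sigma|%:R
  end.

Definition dec'_prob (R : numFieldType) (Sigma : finType) (n : nat)
  (D : {set 'I_n} -> R) (f : {set 'I_n} -> word Sigma n -> option Sigma)
  (q : nat) (delta : R) (y : word Sigma n) (s : Sigma) : R :=
  \sum_(Q : {set 'I_n}) D Q * g_prob (f Q) (light_part D q delta Q) y s.

Definition dec'_err (R : numFieldType) (Sigma : finType) (n : nat)
  (D : {set 'I_n} -> R) (f : {set 'I_n} -> word Sigma n -> option Sigma)
  (q : nat) (delta : R) (y : word Sigma n) (b : Sigma) : R :=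
  \sum_(s : Sigma | s != b) dec'_prob D f q delta y s.

(* Main.v *)
Require Import Defs.
From mathcomp Require Import all_boot all_order all_algebra.
From mathcomp Require Import ring lra.
Import Order.TTheory GRing.Theory Num.Theory.
Set Implicit Arguments. Unset Strict Implicit.
Local Open Scope ring_scope.

Lemma compl_support (R : realFieldType) (T : finType) (D : T -> R) (P : pred T) :
  is_distr D -> 1 <= \sum_(t | P t) D t -> forall t, 0 < D t -> P t.
Proof.
move=> [D0 D1] H t Dt; apply/negPn/negP => nP.
have h1 : D t <= \sum_(t' | ~~ P t') D t'.
  by rewrite (bigD1 t) //= lerDl sumr_ge0.
have h2 : \sum_(t' | P t') D t' + \sum_(t' | ~~ P t') D t' = 1.
  by rewrite -D1 [RHS](bigID P) /=.
lra.
Qed.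

Lemma card_agree (Sigma : finType) (n : nat) (S : {set 'I_n}) (z : word Sigma n) :
  #|[pred u : word Sigma n | [forall j in S, u j == z j]]| = (#|Sigma| ^ #|~: S|)%N.
Proof.
pose F := fun j : 'I_n => if j \in S then pred1 (z j) else predT.
have -> : #|[pred u : word Sigma n | [forall j in S, u j == z j]]| = #|family F|.
  apply: eq_card => u; rewrite !inE; apply/forallP/familyP => h j; move: (h j);
  rewrite /F; case: (j \in S) => //=.
rewrite card_family foldrE big_map big_enum /= -prod_nat_const.
rewrite [RHS]big_mkcond /=; apply: eq_bigr => j _; rewrite /F inE.
case: (j \in S) => /=; last by apply: eq_card.
rewrite -(card1 (z j)); apply: eq_card => x; rewrite !inE.
by [].
Qed.

Lemma sum_query (R : realFieldType) n (D : {set 'I_n} -> R) q :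
  is_distr D -> (forall Q, 0 < D Q -> #|Q| = q) ->
  \sum_j query_prob D j = q%:R.
Proof.
move=> [D0 D1] hQ; rewrite /query_prob.
under eq_bigr => j _ do rewrite big_mkcond.
rewrite exchange_big /=.
transitivity (\sum_(Q : {set 'I_n}) D Q * q%:R); last by rewrite -mulr_suml D1 mul1r.
apply: eq_bigr => Q _; rewrite -big_mkcond sumr_const.
have [->|] := eqVneq (D Q) 0; first by rewrite mul0r mul0rn.
move=> ne; have pos : 0 < D Q by rewrite lt_def ne D0.
by rewrite (hQ Q pos) mulr_natr.
Qed.

Lemma heavy_small (R : realFieldType) n (D : {set 'I_n} -> R) q delta :
  is_distr D -> (forall Q, 0 < D Q -> #|Q| = q) -> 0 < delta ->
  #|heavy D q delta|%:R <= delta * n%:R.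
Proof.
move=> Dd hQ dp.
have [H0|[j0 j0H]] := set_0Vmem (heavy D q delta).
  by rewrite H0 cards0 mulr_ge0 // ltW.
have np : (0 < n)%N by case: j0 {j0H} => m; apply: leq_trans.
have pge : forall j, 0 <= query_prob D j.
  by move=> j; rewrite /query_prob sumr_ge0 // => Q _; case: Dd.
have sq := sum_query Dd hQ.
have h1 : \sum_(j in heavy D q delta) query_prob D j <= q%:R.
  rewrite -sq [X in _ <= X](bigID (mem (heavy D q delta))) /= lerDl.
  by apply: sumr_ge0.
have h2 : \sum_(j in heavy D q delta) (q%:R / (delta * n%:R)) <= \sum_(j in heavy D q delta) query_prob D j.
  by apply: ler_sum => j; rewrite inE => /ltW.
rewrite sumr_const in h2.
have nR : 0 < n%:R :> R by rewrite ltr0n.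
move: j0H; case: q hQ sq h1 h2 => [|q] hQ sq h1 h2 j0H.
  have : query_prob D j0 <= 0.
    rewrite -[X in _ <= X]sq (bigD1 j0) //= lerDl sumr_ge0 //.
  move: j0H; rewrite inE mul0r => a b; lra.
have qp : 0 < q.+1%:R :> R by rewrite ltr0n.
have dn : 0 < delta * n%:R by rewrite mulr_gt0.
have h3 : (q.+1%:R / (delta * n%:R)) * #|heavy D q.+1 delta|%:R <= q.+1%:R.
  by rewrite mulr_natr; exact: le_trans h2 h1.
rewrite mulrAC ler_pdivrMr // in h3.
by rewrite ler_pM2l // in h3.
Qed.

Lemma cv_eq (Sigma : finType) n (fQ : word Sigma n -> option Sigma) (L : {set 'I_n}) (y y' : word Sigma n) :
  (forall j, j \in L -> y j = y' j) -> completion_values fQ L y = completion_values fQ L y'.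
Proof.
move=> e; apply/setP => t; rewrite !inE.
apply/existsP/existsP => -[z /andP [/forallP hz hf]]; exists z; rewrite hf andbT;
  apply/forallP => j; apply/implyP => jL; have := implyP (hz j) jL; rewrite (e j jL) //.
Qed.

Lemma sum_ind (R : realFieldType) (T : finType) (P : pred T) :
  \sum_(t : T) (P t)%:R = #|P|%:R :> R.
Proof.
by rewrite -sum1_card natr_sum [RHS]big_mkcond /=; apply: eq_bigr => t _; rewrite unfold_in; case: (P t).
Qed.

Lemma sum_cst (R : realFieldType) (T : finType) (c : R) :
  \sum_(t : T) c = c * #|T|%:R.
Proof. by rewrite -sum1_card natr_sum mulr_sumr; apply: eq_bigr => t _; rewrite mulr1. Qed.
Theorem mainTheorem2 (R : realFieldType) (Sigma : finType) (k n q : nat)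
  (C : word Sigma k -> word Sigma n) (delta s r : R)
  (D : 'I_k -> {set 'I_n} -> R)
  (f : 'I_k -> {set 'I_n} -> word Sigma n -> option Sigma) :
  0 < delta ->
  (* the decoder: Q ~ D_i over q-element subsets, output f_{i,Q}(y|_Q) *)
  (forall i, is_distr (D i)) ->
  (forall i Q, 0 < D i Q -> #|Q| = q) ->
  (forall i Q, local_on Q (f i Q)) ->
  (* perfect completeness (c = 1) *)
  (forall (b : word Sigma k) (i : 'I_k),
     dec_prob (D i) (f i) (C b) (pred1 (Some (b i))) >= 1) ->
  (* relaxed soundness s *)
  (forall (b : word Sigma k) (i : 'I_k) (y : word Sigma n),
     (hdist y (C b))%:R <= delta * n%:R ->
     dec_prob (D i) (f i) y
       (fun o => (o != Some (b i)) && (o != None)) <= s) ->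
  0 < r ->
  r < delta * (#|Sigma|%:R - 1) / (q%:R * #|Sigma|%:R) * (1 - s * #|Sigma|%:R ^+ q) ->
  (* Dec' makes at most q queries: g_{i,Q} reads only y|_{L(Q)}, |L(Q)| <= q *)
  (forall i Q, 0 < D i Q ->
     (#|light_part (D i) q delta Q| <= q)%N /\
     (forall y y' : word Sigma n,
        (forall j, j \in light_part (D i) q delta Q -> y j = y' j) ->
        forall t, g_prob (R:=R) (f i Q) (light_part (D i) q delta Q) y t
                = g_prob (R:=R) (f i Q) (light_part (D i) q delta Q) y' t)) /\
  (* (q, r, eps)-LDC w.r.t. Dec' *)
  (forall (b : word Sigma k) (i : 'I_k) (y : word Sigma n),
     (hdist y (C b))%:R <= r * n%:R ->
     dec'_err (D i) (f i) q delta y (b i)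
       <= s * #|Sigma|%:R ^+ q * (1 - 1 / #|Sigma|%:R) + r * q%:R / delta).
Proof.
move=> dp Dd hQ loc compl sound rp _.
split.
  move=> i Q DQ; split.
    rewrite /light_part; apply: leq_trans (subset_leq_card (subsetDl _ _)) _.
    by rewrite (hQ i Q DQ).
  move=> y y' e t; rewrite /g_prob /good_val.
  by rewrite (cv_eq (f i Q) e).
move=> b i y hy.
set x := C b. set bi := b i.
set H := heavy (D i) q delta.
set M := #|Sigma|%:R : R.
have Mpos0 : (0 < #|Sigma|)%N by apply/card_gt0P; exists bi.
have Mp : 0 < M by rewrite ltr0n.
have M1 : 1 <= M by rewrite ler1n.
have cM : 0 <= 1 - 1 / M by rewrite subr_ge0 ler_pdivrMr // mul1r.
have [D0 D1] := Dd i.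
have fx : forall Q, 0 < D i Q -> f i Q x = Some bi.
  move=> Q DQ; apply/eqP.
  exact: (compl_support (P := fun Q => f i Q (C b) == Some (b i)) (Dd i) (compl b i) DQ).
pose err Q := \sum_(t | t != bi) g_prob (R:=R) (f i Q) (light_part (D i) q delta Q) y t.
have E : dec'_err (D i) (f i) q delta y bi = \sum_Q D i Q * err Q.
  rewrite /dec'_err /dec'_prob exchange_big /=; apply: eq_bigr => Q _.
  by rewrite mulr_sumr.
have errNone : \sum_(t | t != bi) (1 / M) = 1 - 1 / M.
  rewrite (eq_bigl (fun t => t \in predC1 bi)) // sumr_const cardC1.
  have hM : M = (#|Sigma|.-1)%:R + 1 by rewrite /M -{1}(prednK Mpos0) -addn1 natrD.
  have Mn0 : M != 0 by rewrite gt_eqF.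
  rewrite -mulr_natr; move: Mn0; rewrite hM => Mn0; field.
  by [].
have errle1 : forall Q, err Q <= 1.
  move=> Q; rewrite /err /g_prob; case: good_val => [t0|]; last first.
    by rewrite errNone lerBlDr lerDl divr_ge0 // ltW.
  have h1 : \sum_t (t0 == t)%:R = 1 :> R.
    rewrite (bigD1 t0) //= eqxx big1 ?addr0 // => t /negbTE.
    by rewrite eq_sym => ->.
  apply: le_trans (_ : _ <= \sum_t (t0 == t)%:R) _; last by rewrite h1.
  by rewrite [X in _ <= X](bigID (fun t => t != bi)) /= lerDl sumr_ge0.
pose T1 Q := [exists j in light_part (D i) q delta Q, y j != x j].
pose T2 Q := [exists z : word Sigma n, [forall j in light_part (D i) q delta Q, z j == x j]
   && (f i Q z != Some bi) && (f i Q z != None)].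
have perQ : forall Q, D i Q * err Q <=
    D i Q * (T1 Q)%:R + (1 - 1 / M) * (D i Q * (T2 Q)%:R).
  move=> Q; have [DQ0|DQp] : D i Q = 0 \/ 0 < D i Q.
      by move: (D0 Q); rewrite le_eqVlt => /orP [/eqP <-|->]; [left|right].
    by rewrite DQ0 !mul0r mulr0 addr0.
  case T1Q: (T1 Q).
    rewrite mulr1; apply: le_trans (_ : D i Q <= _).
      by rewrite ler_piMr // ltW.
    by rewrite lerDl mulr_ge0 // mulr_ge0 // ltW.
  have agr : forall j, j \in light_part (D i) q delta Q -> y j = x j.
    move=> j jL; apply/eqP; apply: contraFT T1Q => ne.
    by apply/existsP; exists j; rewrite jL.
  set L := light_part (D i) q delta Q in agr *.
  have biV : bi \in completion_values (f i Q) L x.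
    by rewrite inE; apply/existsP; exists x; rewrite fx // eqxx andbT; apply/forallP => j; apply/implyP.
  rewrite /err /g_prob /good_val (cv_eq (f i Q) agr).
  set V := completion_values (f i Q) L x in biV *.
  case: ifP => [V1|V1].
    case: pickP => [t0 t0V|none]; last by move: (none bi); rewrite biV.
    have [w Vw] := cards1P V1.
    move: t0V biV; rewrite Vw !inE => /eqP -> /eqP ->.
    rewrite big1; first by rewrite mulr0 addr_ge0 // ?mulr_ge0 // ltW.
    by move=> t /negbTE; rewrite eq_sym => ->.
  have T2Q : T2 Q.
    have : ~~ (V \subset [set bi]).
      apply/negP => sub; move: V1; rewrite eqn_leq.
      rewrite (leq_trans (subset_leq_card sub)) ?cards1 //.
      by rewrite /= card_gt0 => /negbT/negP; apply; apply/set0Pn; exists bi.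
    case/subsetPn => t tV; rewrite inE => tb.
    move: tV; rewrite inE => /existsP [z /andP [hz /eqP hf]].
    apply/existsP; exists z; rewrite hz hf /=.
    by rewrite eqE /= tb.
  rewrite T2Q errNone mulr1 mulr0 add0r mulrC //.
have split1 : dec'_err (D i) (f i) q delta y bi <=
   \sum_Q D i Q * (T1 Q)%:R + (1 - 1 / M) * \sum_Q D i Q * (T2 Q)%:R.
  by rewrite E mulr_sumr -big_split /=; apply: ler_sum => Q _; apply: perQ.
set c := q%:R / (delta * n%:R) : R.
have c0 : 0 <= c by rewrite divr_ge0 // mulr_ge0 // ltW.
set Diff := [set j | y j != x j].
set DH := Diff :\: H.
have bT1 : \sum_Q D i Q * (T1 Q)%:R <= r * q%:R / delta.
  apply: le_trans (_ : \sum_Q D i Q * \sum_(j in DH) (j \in Q)%:R <= _).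
    apply: ler_sum => Q _; apply: (ler_wpM2l (D0 Q)).
    case: (boolP (T1 Q)) => [/existsP [j /andP [jL yj]] | _]; last by rewrite sumr_ge0.
    move: jL; rewrite /light_part !inE => /andP [jH jQ].
    rewrite (bigD1 j) /=; last by rewrite !inE yj jH.
    by rewrite jQ lerDl sumr_ge0.
  have -> : \sum_Q D i Q * \sum_(j in DH) (j \in Q)%:R = \sum_(j in DH) query_prob (D i) j.
    under eq_bigr do rewrite mulr_sumr.
    rewrite exchange_big /=; apply: eq_bigr => j _.
    rewrite /query_prob [RHS]big_mkcond /=; apply: eq_bigr => Q _.
    by case: (j \in Q); rewrite ?mulr1 ?mulr0.
  apply: le_trans (_ : \sum_(j in DH) c <= _).
    apply: ler_sum => j; rewrite !inE => /andP [jH _].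
    by move: jH; rewrite leNgt.
  rewrite sumr_const.
  have cardDH : (#|DH| <= #|Diff|)%N by apply: subset_leq_card; apply: subsetDl.
  have [n0|npos] := posnP n.
    have -> : #|DH| = 0%N.
      by apply/eqP; rewrite -leqn0 -[X in (_ <= X)%N]n0 -[X in (_ <= X)%N](card_ord n) max_card.
    by rewrite mulr0n divr_ge0 // ?mulr_ge0 // ltW.
  apply: (@le_trans _ _ (c * (r * n%:R))).
    rewrite -[c *+ #|DH|]mulr_natr; apply: (ler_wpM2l c0); apply: le_trans hy; rewrite ler_nat; exact: cardDH.
  have nn0 : n%:R != 0 :> R by rewrite pnatr_eq0 -lt0n.
  have dn0 : delta != 0 by rewrite gt_eqF.
  by rewrite /c le_eqVlt; apply/orP; left; apply/eqP; field; rewrite nn0 dn0.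
pose y' (u : word Sigma n) : word Sigma n := [ffun j => if j \in H then u j else x j].
pose bad (o : option Sigma) := (o != Some bi) && (o != None).
have hy' : forall u, (hdist (y' u) x)%:R <= delta * n%:R.
  move=> u; apply: le_trans (heavy_small (Dd i) (hQ i) dp); rewrite ler_nat.
  apply: subset_leq_card; apply/subsetP => j; rewrite [in X in X -> _]inE ffunE.
  by case: ifP => // _; rewrite eqxx.
have snd : forall u, \sum_Q D i Q * (bad (f i Q (y' u)))%:R <= s.
  move=> u; apply: le_trans (sound b i (y' u) (hy' u)).
  rewrite /dec_prob [X in _ <= X]big_mkcond /=; apply: ler_sum => Q _.
  by rewrite /bad; case: ifP => _; rewrite ?mulr1 ?mulr0.
have sumu : \sum_(u : word Sigma n) \sum_Q D i Q * (bad (f i Q (y' u)))%:R <= s * M ^+ n.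
  apply: le_trans (_ : \sum_(u : word Sigma n) s <= _); first exact: ler_sum.
  by rewrite sum_cst card_ffun card_ord natrX.
set K := M ^+ n / M ^+ q.
have Kp : 0 < K by rewrite divr_gt0 // exprn_gt0.
have perQ2 : forall Q, D i Q * (T2 Q)%:R * K <=
     D i Q * \sum_(u : word Sigma n) (bad (f i Q (y' u)))%:R.
  move=> Q; have [DQ0|DQp] : D i Q = 0 \/ 0 < D i Q.
      by move: (D0 Q); rewrite le_eqVlt => /orP [/eqP <-|->]; [left|right].
    by rewrite DQ0 !mul0r.
  case: (boolP (T2 Q)) => [/existsP [z /andP [/andP [hz hb1] hb2]]|_]; last first.
    by rewrite mulr0 mul0r mulr_ge0 // sumr_ge0.
  rewrite mulr1; apply: (ler_wpM2l (D0 Q)).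
  set S := Q :&: H.
  apply: le_trans (_ : \sum_(u : word Sigma n) ([forall j in S, u j == z j])%:R <= _); last first.
    apply: ler_sum => u _; case: (boolP [forall j in S, u j == z j]) => // hu.
    suff -> : f i Q (y' u) = f i Q z by rewrite /bad hb1 hb2.
    apply: loc => j jQ; rewrite ffunE; case: ifP => jH.
      by apply/eqP; move/forallP: hu => /(_ j); rewrite in_setI jQ jH.
    by apply/esym/eqP; move/forallP: hz => /(_ j); rewrite /light_part in_setD jQ jH.
  rewrite (sum_ind R (fun u : word Sigma n => [forall j in S, u j == z j])).
  have := card_agree S z. rewrite /=. move=> ->.
  have SQ : (#|S| <= q)%N by rewrite -(hQ i Q DQp) subset_leq_card // subsetIl.
  have cS : (#|S| + #|~: S| = n)%N by rewrite cardsC card_ord.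
  rewrite /K ler_pdivrMr ?exprn_gt0 // natrX -exprD.
  have e : M ^+ n = M ^+ (#|~: S| + #|S|) by rewrite addnC cS.
  by rewrite e; apply: (ler_weXn2l M1); rewrite leq_add2l.
have bT2 : \sum_Q D i Q * (T2 Q)%:R <= s * M ^+ q.
  have h : (\sum_Q D i Q * (T2 Q)%:R) * K <= s * M ^+ n.
    rewrite mulr_suml; apply: le_trans sumu.
    rewrite [X in _ <= X]exchange_big /=; apply: ler_sum => Q _; rewrite -mulr_sumr; exact: perQ2.
  have e : s * M ^+ n = s * M ^+ q * K.
    have Mq : M ^+ q != 0 by rewrite gt_eqF // exprn_gt0.
    by rewrite /K; field.
  by rewrite e ler_pM2r // in h.
apply: le_trans split1 _.
have := ler_wpM2l cM bT2.
rewrite [s * M ^+ q * _]mulrC.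
lra.
Qed.
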